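(* Let $\mathcal A_{IV}$ be the algebra of Laurent polynomials in $a_{IV},b_{IV},c_{IV},d_{IV},e_{IV},f_{IV},h_{IV}$ with the log-canonical bracket (writing $a,\dots,h$ for the $IV$-variables) $\{a,b\}=0,\ \{a,c\}=-\tfrac12 ac,\ \{a,d\}=-\tfrac12 ad,\ \{a,e\}=0,\ \{a,f\}=\tfrac12 af,\ \{a,h\}=\tfrac12 ah,$ $\{b,c\}=\tfrac14 bc,\ \{b,d\}=0,\ \{b,e\}=\tfrac14 be,\ \{b,f\}=\tfrac14 bf,\ \{b,h\}=-\tfrac14 bh,$ $\{c,d\}=-\tfrac14 cd,\ \{c,e\}=\tfrac14 ce,\ \{c,f\}=0,\ \{c,h\}=\tfrac14 ch,$ $\{d,e\}=-\tfrac14 de,\ \{d,f\}=\tfrac14 df,\ \{d,h\}=\tfrac14 dh,\ \{e,f\}=-\tfrac14 ef,\ \{e,h\}=0,\ \{f,h\}=\tfrac14 fh$. Let $\mathcal A_{II}$ be the algebra of Laurent polynomials in $a,b,c,d,e,f,g,h,i$ with the log-canonical bracket $\{a,b\}=0,\ \{a,c\}=-\tfrac14 ac,\ \{a,d\}=-\tfrac14 ad,\ \{a,e\}=0,\ \{a,f\}=\tfrac14 af,\ \{a,g\}=-\tfrac14 ag,\ \{a,h\}=\tfrac14 ah,\ \{a,i\}=\tfrac14 ai,$ $\{b,c\}=\tfrac14 bc,\ \{b,d\}=0,\ \{b,e\}=\tfrac14 be,\ \{b,f\}=\tfrac14 bf,\ \{b,g\}=0,\ \{b,h\}=-\tfrac14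 bh,\ \{b,i\}=0,$ $\{c,d\}=-\tfrac14 cd,\ \{c,e\}=\tfrac14 ce,\ \{c,f\}=-\tfrac14 cf,\ \{c,g\}=\{c,h\}=0,\ \{c,i\}=\tfrac14 ci,$ $\{d,e\}=-\tfrac14 de,\ \{d,f\}=\{d,g\}=\{d,h\}=0,\ \{d,i\}=\tfrac14 di,$ $\{e,f\}=-\tfrac14 ef,\ \{e,g\}=\{e,h\}=\{e,i\}=0,$ $\{f,g\}=-\tfrac14 fg,\ \{f,h\}=\tfrac14 fh,\ \{f,i\}=0,\ \{g,h\}=\tfrac14 gh,\ \{g,i\}=-\tfrac14 gi,\ \{h,i\}=0$. Then the assignment $a_{IV}\mapsto ag$, $b_{IV}\mapsto b$, $c_{IV}\mapsto cg$, $d_{IV}\mapsto dg$, $e_{IV}\mapsto e$, $f_{IV}\mapsto f$, $h_{IV}\mapsto h$ defines an injective Poisson homomorphism $\mathcal A_{IV}\to\mathcal A_{II}$, realising $\mathcal A_{IV}$ as a Poisson subalgebra of $\mathcal A_{II}$.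
   Context: A log-canonical bracket is extended from the generators to all Laurent polynomials by bilinearity, antisymmetry and the Leibniz rule. *)

(* Defs.v *)
(* Laurent polynomials in n variables over a field K are
   finitely supported functions 'rV[int]_n -> K, i.e. the monoid-algebra
   carrier {malg K['rV[int]_n]} of multinomials' monalg (which provides the
   K-vector space structure; multiplication is defined below by hand since
   monalg's ring structure only exists for monomials without inverses). *)
From HB Require Import structures.
From mathcomp Require Import all_boot all_order all_algebra.
From mathcomp Require Import finmap.
From mathcomp.multinomials Require Import monalg.
Set Implicit Arguments. Unset Strict Implicit. Unset Printing Implicit Defensive.
Import Order.TTheory GRing.Theory Num.Theory.
Local Open Scope ring_scope.

Notation expo n := 'rV[int]_n.
Notation laurent K n := {malg K[expo n]}.

Section Laurent.
Variables (K : fieldType) (n : nat).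

Definition lmono (c : K) (a : expo n) : laurent K n := << c *g a >>.

Definition lone : laurent K n := lmono 1 0.

Definition lmul (p q : laurent K n) : laurent K n :=
  \sum_(a <- msupp p) \sum_(b <- msupp q) lmono (p@_a * q@_b) (a + b).

Definition lpair (Om : 'M[K]_n) (a b : expo n) : K :=
  \sum_(i < n) \sum_(j < n) (a ord0 i)%:~R * (b ord0 j)%:~R * Om i j.

(* The log-canonical bracket with (skew-symmetric) coefficient matrix Om,
   i.e. {x_i, x_j} = Om i j * x_i x_j on generators, extended to all
   Laurent polynomials by bilinearity, antisymmetry and Leibniz rule.
   On monomials the Leibniz rule (also for inverses) forces
   {x^a, x^b} = (a^T Om b) x^(a+b); extending bilinearly gives: *)
Definition lbracket (Om : 'M[K]_n) (p q : laurent K n) : laurent K n :=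
  \sum_(a <- msupp p) \sum_(b <- msupp q)
     lmono (p@_a * q@_b * lpair Om a b) (a + b).
End Laurent.

(* The algebra homomorphism determined by sending each generator x_i to a
   Laurent monomial x^(V i) (V : integer matrix whose rows are exponent
   vectors): it sends x^a to x^(a *m V). *)
Definition lmonomap (K : fieldType) (m n : nat) (V : 'M[int]_(m, n))
  (p : laurent K m) : laurent K n :=
  \sum_(a <- msupp p) lmono (p@_a) (a *m V).

Definition skew_of (K : fieldType) (n : nat) (up : nat -> nat -> int)
  : 'M[K]_n :=
  \matrix_(i, j) ((if (i < j)%N then up i j
                   else if (j < i)%N then - up j i else 0)%:~R / 4%:R).

(* A_IV: variables a b c d e f h  = indices 0 1 2 3 4 5 6.
   Numerators over 4 of {x_i,x_j}/(x_i x_j) for i < j. *)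
Local Open Scope nat_scope.
Definition upIV (i j : nat) : int :=
  match i, j with
  | 0, 2 => (-2)%R | 0, 3 => (-2)%R | 0, 5 => (2)%R | 0, 6 => (2)%R
  | 1, 2 => (1)%R | 1, 4 => (1)%R | 1, 5 => (1)%R | 1, 6 => (-1)%R
  | 2, 3 => (-1)%R | 2, 4 => (1)%R | 2, 6 => (1)%R
  | 3, 4 => (-1)%R | 3, 5 => (1)%R | 3, 6 => (1)%R
  | 4, 5 => (-1)%R
  | 5, 6 => (1)%R
  | _, _ => (0)%R
  end.

(* A_II: variables a b c d e f g h i = indices 0 .. 8. *)
Definition upII (i j : nat) : int :=
  match i, j with
  | 0, 2 => (-1)%R | 0, 3 => (-1)%R | 0, 5 => (1)%R | 0, 6 => (-1)%R | 0, 7 => (1)%R | 0, 8 => (1)%R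
  | 1, 2 => (1)%R | 1, 4 => (1)%R | 1, 5 => (1)%R | 1, 7 => (-1)%R
  | 2, 3 => (-1)%R | 2, 4 => (1)%R | 2, 5 => (-1)%R | 2, 8 => (1)%R
  | 3, 4 => (-1)%R | 3, 8 => (1)%R
  | 4, 5 => (-1)%R
  | 5, 6 => (-1)%R | 5, 7 => (1)%R
  | 6, 7 => (1)%R | 6, 8 => (-1)%R
  | _, _ => (0)%R
  end.

Definition OmIV (K : fieldType) : 'M[K]_7 := @skew_of K 7 upIV.
Definition OmII (K : fieldType) : 'M[K]_9 := @skew_of K 9 upII.

(* images of the generators of A_IV as exponent vectors in A_II:
   a_IV -> a g, b_IV -> b, c_IV -> c g, d_IV -> d g, e_IV -> e,
   f_IV -> f, h_IV -> h. *)
Definition imgIV (i j : nat) : int :=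
  match i, j with
  | 0, 0 => (1)%R | 0, 6 => (1)%R
  | 1, 1 => (1)%R
  | 2, 2 => (1)%R | 2, 6 => (1)%R
  | 3, 3 => (1)%R | 3, 6 => (1)%R
  | 4, 4 => (1)%R
  | 5, 5 => (1)%R
  | 6, 7 => (1)%R
  | _, _ => (0)%R
  end.

Local Open Scope ring_scope.
Definition VIV : 'M[int]_(7, 9) := \matrix_(i, j) imgIV i j.

Definition phiIV (K : fieldType) : laurent K 7 -> laurent K 9 :=
  @lmonomap K 7 9 VIV.

(* Main.v *)
Require Import Defs.
From HB Require Import structures.
From mathcomp Require Import all_boot all_order all_algebra ring.
From mathcomp Require Import finmap.
From mathcomp.multinomials Require Import monalg.
Set Implicit Arguments. Unset Strict Implicit. Unset Printing Implicit Defensive.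
Import Order.TTheory GRing.Theory Num.Theory.
Local Open Scope ring_scope.


Section Gen.
Variables (K : fieldType) (m : nat) (V : lmodType K) (F : K -> expo m -> V).
Hypothesis F0 : forall a, F 0 a = 0.
Hypothesis FD : forall x y a, F (x + y) a = F x a + F y a.
Hypothesis FZ : forall c x a, F (c * x) a = c *: F x a.

Definition Gs (p : laurent K m) : V := \sum_(a <- msupp p) F p@_a a.

Lemma Gw d p : (msupp p `<=` d)%fset -> Gs p = \sum_(a <- d) F p@_a a.
Proof.
move=> le; rewrite /Gs (big_fset_incl _ le) // => x _ /mcoeff_outdom ->.
exact: F0.
Qed.

Lemma GD p q : Gs (p + q) = Gs p + Gs q.
Proof.
pose d := (msupp p `|` msupp q `|` msupp (p + q))%fset.
have h1 : (msupp p `<=` d)%fset by rewrite /d -fsetUA fsubsetUl.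
have h2 : (msupp q `<=` d)%fset by rewrite /d -fsetUA fsubsetU // fsubsetUl orbT.
have h3 : (msupp (p + q) `<=` d)%fset by rewrite /d fsubsetUr.
rewrite (Gw h1) (Gw h2) (Gw h3) -big_split /=.
by apply: eq_bigr => a _; rewrite mcoeffD FD.
Qed.

Lemma GZ c p : Gs (c *: p) = c *: Gs p.
Proof.
rewrite (Gw (msuppZ_le c p)) /Gs scaler_sumr.
by apply: eq_bigr => a _; rewrite mcoeffZ FZ.
Qed.

Lemma G0 : Gs 0 = 0.
Proof. by rewrite /Gs msupp0 big_seq_fset0. Qed.

Lemma GU c a : Gs << c *g a >> = F c a.
Proof. by rewrite (Gw msuppU_le) big_seq_fset1 mcoeffUU. Qed.

Lemma Gsum (I : Type) (r : seq I) (P : pred I) (f : I -> laurent K m) :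
  Gs (\sum_(i <- r | P i) f i) = \sum_(i <- r | P i) Gs (f i).
Proof. exact: (big_morph Gs GD G0). Qed.
End Gen.

Section Lm.
Variables (K : fieldType) (n : nat).
Lemma lmono0 (a : expo n) : lmono (0 : K) a = 0.
Proof. exact: monalgU0. Qed.
Lemma lmonoD (x y : K) (a : expo n) : lmono (x + y) a = lmono x a + lmono y a.
Proof. exact: monalgUD. Qed.
Lemma lmono_eq (x y : K) (a : expo n) : x = y -> lmono x a = lmono y a.
Proof. by move->. Qed.
Lemma lmonoZ (c x : K) (a : expo n) : lmono (c * x) a = c *: lmono x a.
Proof. apply/malgP => k. rewrite mcoeffZ.
transitivity ((c*x) *+ (a == k)); first exact: mcoeffU.
transitivity (c * (x *+ (a == k))); first by rewrite mulrnAr.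
congr (_ * _); symmetry; exact: mcoeffU.
Qed.

Variable w : expo n -> expo n -> K.
Definition Fin (x : K) (a : expo n) := fun y b => lmono (x * y * w a b) (a + b).
Definition Fout (q : laurent K n) := fun x a => Gs (Fin x a) q.
Definition Bw (p q : laurent K n) := Gs (Fout q) p.

Lemma Fin0 x a b : Fin x a 0 b = 0.
Proof. by rewrite /Fin mulr0 mul0r lmono0. Qed.
Lemma FinD x a y z b : Fin x a (y + z) b = Fin x a y b + Fin x a z b.
Proof. by rewrite /Fin mulrDr mulrDl lmonoD. Qed.
Lemma FinZ x a c y b : Fin x a (c * y) b = c *: Fin x a y b.
Proof.
rewrite /Fin; apply: (eq_trans _ (lmonoZ c (x * y * w a b) (a + b))).
by apply: lmono_eq; ring.
Qed.

Lemma Fout0 q a : Fout q 0 a = 0.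
Proof. by rewrite /Fout /Gs big1 // => b _; rewrite /Fin !mul0r lmono0. Qed.
Lemma FoutD q x y a : Fout q (x + y) a = Fout q x a + Fout q y a.
Proof. by rewrite /Fout /Gs -big_split; apply: eq_bigr => b _; rewrite /Fin !mulrDl lmonoD. Qed.
Lemma FoutZ q c x a : Fout q (c * x) a = c *: Fout q x a.
Proof.
rewrite /Fout /Gs scaler_sumr; apply: eq_bigr => b _; rewrite /Fin.
    apply: (eq_trans _ (lmonoZ c (x * q@_b * w a b) (a + b))).
by apply: lmono_eq; ring.
Qed.

Lemma BwsumL (I : Type) (r : seq I) (P : pred I) (f : I -> laurent K n) q :
  Bw (\sum_(i <- r | P i) f i) q = \sum_(i <- r | P i) Bw (f i) q.
Proof. exact: (Gsum (Fout0 q) (FoutD q)). Qed.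

Lemma BwUl x c q : Bw (lmono x c) q = Gs (Fin x c) q.
Proof. exact: (GU (Fout0 q)). Qed.
End Lm.

Definition Fphi (K : fieldType) (x : K) (a : expo 7) : laurent K 9 := lmono x (a *m VIV).
Lemma Fphi0 K a : @Fphi K 0 a = 0. Proof. exact: lmono0. Qed.
Lemma FphiD K x y a : @Fphi K (x + y) a = Fphi x a + Fphi y a. Proof. exact: lmonoD. Qed.
Lemma FphiZ K c x a : @Fphi K (c * x) a = c *: Fphi x a. Proof. exact: lmonoZ. Qed.
Lemma phiE K p : phiIV p = Gs (@Fphi K) p. Proof. by []. Qed.

Lemma phiBw (K : fieldType) (w : expo 7 -> expo 7 -> K) (w' : expo 9 -> expo 9 -> K)
  (hw : forall a b, w' (a *m VIV) (b *m VIV) = w a b) p q :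
  phiIV (Bw w p q) = Bw w' (phiIV p) (phiIV q).
Proof.
rewrite !phiE [Bw w p q]/Bw [Gs (Fout w q) p]/Gs (Gsum (@Fphi0 K) (@FphiD K)).
rewrite [Gs (@Fphi K) p]/Gs BwsumL; apply: eq_bigr => a _.
rewrite {1}/Fout [Gs (Fin w _ a) q]/Gs (Gsum (@Fphi0 K) (@FphiD K)) {2}/Fphi BwUl.
rewrite [Gs (@Fphi K) q]/Gs (Gsum (Fin0 _ _ _) (FinD _ _ _)); apply: eq_bigr => b _.
rewrite (GU (@Fphi0 K)) (GU (Fin0 _ _ _)) /Fphi /Fin hw mulmxDl.
by [].
Qed.
Definition sk (up : nat -> nat -> int) (i j : nat) : int :=
  if (i < j)%N then up i j else if (j < i)%N then - up j i else 0.

Lemma pairZ (i j : 'I_7) :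
  \sum_(k < 9) \sum_(l < 9) VIV i k * VIV j l * sk upII k l = sk upIV i j.
Proof.
rewrite !big_ord_recl !big_ord0 !mxE.
case: i => [[|[|[|[|[|[|[|i]]]]]]] Hi] //; case: j => [[|[|[|[|[|[|[|j]]]]]]] Hj] //.
Qed.
Lemma lpairV (K : fieldType) (a b : expo 7) :
  lpair (OmII K) (a *m VIV) (b *m VIV) = lpair (OmIV K) a b.
Proof.
rewrite /lpair.
pose A i := (a ord0 i)%:~R : K.
pose B j := (b ord0 j)%:~R : K.
pose v i k := (VIV i k)%:~R : K.
pose s k l := (sk upII k l)%:~R / 4%:R : K.
transitivity (\sum_(i < 7) \sum_(j < 7) \sum_(k < 9) \sum_(l < 9)
   A i * B j * (v i k * v j l * s k l)).
  transitivity (\sum_(k < 9) \sum_(l < 9) \sum_(i < 7) \sum_(j < 7)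
     A i * B j * (v i k * v j l * s k l)).
    apply: eq_bigr => k _; apply: eq_bigr => l _.
    rewrite !mxE !rmorph_sum /= mulr_suml mulr_suml; apply: eq_bigr => i _.
    rewrite mulr_sumr mulr_suml; apply: eq_bigr => j _.
    rewrite !rmorphM /= /A /B /v /s.
    ring.
  under eq_bigr => k _ do rewrite exchange_big /=.
  rewrite exchange_big /=.
  under eq_bigr => i _ do under eq_bigr => k _ do rewrite exchange_big /=.
  under eq_bigr => i _ do rewrite exchange_big /=.
  by [].
apply: eq_bigr => i _; apply: eq_bigr => j _.
have -> : OmIV K i j = (sk upIV i j)%:~R / 4%:R by rewrite mxE.
rewrite -pairZ rmorph_sum /= mulr_suml mulr_sumr; apply: eq_bigr => k _.
rewrite rmorph_sum /= mulr_suml mulr_sumr; apply: eq_bigr => l _.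
rewrite !rmorphM /= /A /B /v /s; ring.
Qed.
Definition imgW (k i : nat) : int :=
  match k, i with
  | 0, 0 => 1 | 1, 1 => 1 | 2, 2 => 1 | 3, 3 => 1 | 4, 4 => 1 | 5, 5 => 1
  | 7, 6 => 1 | _, _ => 0 end.
Definition WIV : 'M[int]_(9, 7) := \matrix_(k, i) imgW k i.

Lemma VW : VIV *m WIV = 1%:M.
Proof.
apply/matrixP => i j; rewrite !mxE.
rewrite !big_ord_recl big_ord0 !mxE.
case: i => [[|[|[|[|[|[|[|i]]]]]]] Hi] //; case: j => [[|[|[|[|[|[|[|j]]]]]]] Hj] //.
Qed.

Lemma Vinj : injective (fun a : expo 7 => a *m VIV).
Proof. by move=> a b /= h; rewrite -(mulmx1 a) -(mulmx1 b) -VW !mulmxA h. Qed.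

Lemma phi_coef (K : fieldType) (p : laurent K 7) a : (phiIV p)@_(a *m VIV) = p@_a.
Proof.
rewrite phiE /Gs raddf_sum /=.
transitivity ((\sum_(b <- msupp p) << p@_b *g b >>)@_a); last by rewrite -monalgE.
rewrite raddf_sum /=; apply: eq_bigr => b _.
rewrite /Fphi /lmono.
transitivity (p@_b *+ (b *m VIV == a *m VIV)); first exact: mcoeffU.
rewrite (inj_eq Vinj); symmetry; exact: mcoeffU.
Qed.

Lemma lmulBw (K : fieldType) n (p q : laurent K n) :
  lmul p q = Bw (fun _ _ => 1) p q.
Proof.
apply: eq_bigr => a _; apply: eq_bigr => b _; apply: lmono_eq; by rewrite mulr1.
Qed.

Theorem mainTheorem8 (K : fieldType) (charK0 : [pchar K] =i pred0) :
  let phi := @phiIV K in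
  (forall p q, phi (p + q) = phi p + phi q) /\
  (forall (c : K) p, phi (c *: p) = c *: phi p) /\
  (forall p q, phi (lmul p q) = lmul (phi p) (phi q)) /\
  phi (@lone K 7) = @lone K 9 /\
  (forall p q,
     phi (lbracket (@OmIV K) p q) = lbracket (@OmII K) (phi p) (phi q)) /\
  injective phi.
Proof.
move=> phi; split; first by move=> p q; rewrite /phi !phiE (GD (@Fphi0 K) (@FphiD K)).
split; first by move=> c p; rewrite /phi !phiE (GZ (@Fphi0 K) (@FphiZ K)).
split; first by move=> p q; rewrite /phi !lmulBw; apply: phiBw.
split; first by rewrite /phi phiE /lone (GU (@Fphi0 K)) /Fphi mul0mx.
split; first by move=> p q; apply: (phiBw (@lpairV K)).
move=> p q h; apply/malgP => a; rewrite -(phi_coef p a) -(phi_coef q a).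
exact: (congr1 (mcoeff (a *m VIV)) h).
Qed.
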